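(* Let $\frac{p}{q}\in\mathbb{Q}\cap[0,1)$. Then there exists an integer $k\ge 0$ such that $R^k\!\left(\frac{p}{q}\right)\in\{0,\tfrac12\}$.
   Context: The map $R:[0,1)\to[0,1)$ is defined by $R(s)=\frac{s}{1-2s}-\left\lfloor\frac{s}{1-2s}\right\rfloor$ for $s\in[0,\tfrac12)$ and $R(s)=1-s$ for $s\in[\tfrac12,1)$; $R^k$ denotes the $k$-fold iterate, $R^0$ the identity. *)

(* Defs.v *)
From Stdlib Require Import Reals ZArith.
Open Scope R_scope.

(* floor x = Int_part x (Int_part x = up x - 1 is the floor of x). *)
Definition floorR (x : R) : R := IZR (Int_part x).

Definition Rmap (s : R) : R :=
  if Rlt_dec s (1/2) then s / (1 - 2*s) - floorR (s / (1 - 2*s))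
  else 1 - s.

Definition Rmap_iter (k : nat) (s : R) : R := Nat.iter k Rmap s.

(* Main.v *)
Require Import Defs.
From Stdlib Require Import Reals ZArith Lra Lia.
Open Scope R_scope.

Lemma iter_S (k : nat) (s : R) : Rmap_iter (S k) s = Rmap_iter k (Rmap s).
Proof.
  unfold Rmap_iter. revert s. induction k; intros s; simpl; auto.
  simpl in IHk. rewrite <- IHk. reflexivity.
Qed.

Lemma floor_div (a d : Z) : (0 < d)%Z -> floorR (IZR a / IZR d) = IZR (a / d).
Proof.
  intros Hd. unfold floorR, Int_part.
  assert (Hdr : 0 < IZR d) by (apply IZR_lt; lia).
  pose proof (Z.div_mod a d ltac:(lia)) as E.
  pose proof (Z.mod_pos_bound a d Hd) as B.
  set (m := (a mod d)%Z) in *. set (t := (a / d)%Z) in *.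
  assert (Ea : IZR a = IZR d * IZR t + IZR m) by (rewrite E, plus_IZR, mult_IZR; auto).
  assert (Hm0 : 0 <= IZR m) by (apply IZR_le; lia).
  assert (Hm1 : IZR m < IZR d) by (apply IZR_lt; lia).
  assert (Hq : IZR a / IZR d = IZR t + IZR m / IZR d) by (rewrite Ea; field; lra).
  assert (H0 : 0 <= IZR m / IZR d) by (unfold Rdiv; apply Rmult_le_pos; [lra | left; apply Rinv_0_lt_compat; lra]).
  assert (H1 : IZR m / IZR d < 1) by (apply (Rmult_lt_reg_r (IZR d)); [lra|]; replace (IZR m / IZR d * IZR d) with (IZR m) by (field; lra); lra).
  rewrite <- (tech_up (IZR a / IZR d) (t + 1)).
  - rewrite minus_IZR, plus_IZR. f_equal. ring.
  - rewrite plus_IZR, Hq. lra.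
  - rewrite plus_IZR, Hq. lra.
Qed.

Lemma step_lt (q : Z) :
  (forall q', (0 < q' < q)%Z -> forall p, (0 <= p < q')%Z ->
     exists k : nat, Rmap_iter k (IZR p / IZR q') = 0 \/ Rmap_iter k (IZR p / IZR q') = 1/2) ->
  forall p, (0 <= p)%Z -> (2 * p < q)%Z ->
     exists k : nat, Rmap_iter k (IZR p / IZR q) = 0 \/ Rmap_iter k (IZR p / IZR q) = 1/2.
Proof.
  intros IH p Hp Hpq.
  destruct (Z.eq_dec p 0) as [->|Hp0].
  { exists O. left. simpl. unfold Rdiv. ring. }
  set (d := (q - 2 * p)%Z).
  assert (Hd : (0 < d < q)%Z) by (unfold d; lia).
  pose proof (Z.mod_pos_bound p d ltac:(lia)) as B.
  destruct (IH d Hd (p mod d)%Z B) as [k Hk].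
  exists (S k). rewrite iter_S.
  assert (Hqr : 0 < IZR q) by (apply IZR_lt; lia).
  assert (Hdr : 0 < IZR d) by (apply IZR_lt; lia).
  assert (Ed : IZR d = IZR q - 2 * IZR p) by (unfold d; rewrite minus_IZR, mult_IZR; auto).
  assert (Hlt : 2 * IZR p < IZR q) by lra.
  assert (Hs : IZR p / IZR q < 1/2).
  { apply (Rmult_lt_reg_r (2 * IZR q)); [lra|].
    replace (IZR p / IZR q * (2 * IZR q)) with (2 * IZR p) by (field; lra). lra. }
  assert (Ef : IZR p / IZR q / (1 - 2 * (IZR p / IZR q)) = IZR p / IZR d).
  { rewrite Ed. field. split; lra. }
  assert (Hm : Rmap (IZR p / IZR q) = IZR (p mod d) / IZR d).
  { unfold Rmap. destruct (Rlt_dec _ _); [|lra].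
    rewrite Ef, floor_div by lia.
    pose proof (Z.div_mod p d ltac:(lia)) as E.
    assert (Ea : IZR p = IZR d * IZR (p / d) + IZR (p mod d)) by
      (rewrite E at 1; rewrite plus_IZR, mult_IZR; auto).
    rewrite Ea. field. lra. }
  rewrite Hm. exact Hk.
Qed.

Theorem lemma3p1 (p q : Z) :
  (0 < q)%Z -> 0 <= IZR p / IZR q < 1 ->
  exists k : nat, Rmap_iter k (IZR p / IZR q) = 0 \/ Rmap_iter k (IZR p / IZR q) = 1/2.
Proof.
  intros Hq Hs.
  assert (Hqr : 0 < IZR q) by (apply IZR_lt; lia).
  assert (Hb : (0 <= p < q)%Z).
  { assert (0 <= IZR p).
    { replace (IZR p) with (IZR p / IZR q * IZR q) by (field; lra). nra. }
    assert (IZR p < IZR q).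
    { replace (IZR p) with (IZR p / IZR q * IZR q) by (field; lra). nra. }
    split; [apply le_IZR | apply lt_IZR]; lra. }
  clear Hs.
  assert (Hq0 : (0 <= q)%Z) by lia. revert Hq p Hb. pattern q. apply Z_lt_induction; [|exact Hq0]. clear q Hqr Hq0.
  intros q IH Hq p Hb.
  assert (Hqr : 0 < IZR q) by (apply IZR_lt; lia).
  assert (IH' : forall q', (0 < q' < q)%Z -> forall p, (0 <= p < q')%Z ->
     exists k : nat, Rmap_iter k (IZR p / IZR q') = 0 \/ Rmap_iter k (IZR p / IZR q') = 1/2)
    by (intros; apply IH; lia || auto).
  destruct (Z_lt_le_dec (2 * p) q) as [H|H].
  - apply step_lt; auto; lia.
  - destruct (Z.eq_dec (2 * p) q) as [He|He].
    + exists O. right. simpl. rewrite <- He, mult_IZR. field.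
      intro Hc. subst q. rewrite mult_IZR, Hc in Hqr. lra.
    + destruct (step_lt q IH' (q - p)%Z ltac:(lia) ltac:(lia)) as [k Hk].
      exists (S k). rewrite iter_S.
      assert (Hlt : IZR q < 2 * IZR p) by (rewrite <- mult_IZR; apply IZR_lt; lia).
      assert (Hm : Rmap (IZR p / IZR q) = IZR (q - p) / IZR q).
      { unfold Rmap. destruct (Rlt_dec _ _) as [r|_].
        - exfalso. apply (Rmult_lt_compat_r (2 * IZR q)) in r; [|lra].
          replace (IZR p / IZR q * (2 * IZR q)) with (2 * IZR p) in r by (field; lra). lra.
        - rewrite minus_IZR. field. lra. }
      rewrite Hm. exact Hk.
Qed.
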